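(* Let $p$ be a prime, $d\ge2$, $1\le k<d$, and write $x=(x_1,x_2)\in\mathbb{Z}_p^k\times\mathbb{Z}_p^{d-k}$. Let $A=\mathbb{Z}_p^k\times\{0\}\subseteq\mathbb{Z}_p^d$ and $B=\{0\}\times\mathbb{Z}_p^{d-k}\subseteq\mathbb{Z}_p^d$, and let $g\in L^2(\mathbb{Z}_p^d)$ with $\|g\|_2=1$. Then the Gabor system $\mathcal{G}(g,A,B)$ is an orthonormal basis of $L^2(\mathbb{Z}_p^d)$ if and only if both of the following hold: (a) for every $x_2\in\mathbb{Z}_p^{d-k}$, the function $m\mapsto\left|\sum_{x_1\in\mathbb{Z}_p^k}g(x_1,x_2)\chi(-x_1\cdot m)\right|$ is constant on $\mathbb{Z}_p^k$ (the constant may depend on $x_2$); (b) the function $x_2\mapsto\sum_{x_1\in\mathbb{Z}_p^k}|g(x_1,x_2)|^2$ is constant on $\mathbb{Z}_p^{d-k}$.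
   Context: $\mathbb{Z}_p^n$ is the $n$-dimensional vector space over the field $\mathbb{Z}_p$ ($p$ prime), $x\cdot b=\sum_i x_ib_i$, and $\chi(t)=e^{2\pi i t/p}$. $L^2(\mathbb{Z}_p^d)$ is the space of functions $\mathbb{Z}_p^d\to\mathbb{C}$ with inner product $\langle f,h\rangle=\sum_{x} f(x)\overline{h(x)}$. The Gabor system is $\mathcal{G}(g,A,B)=\{x\mapsto g(x-a)\chi(x\cdot b)\}_{a\in A,\ b\in B}$. *)

(* Defs.v *)
(* Z_p^n = 'rV['F_p]_n, functions valued in algC (complex algebraic numbers). *)
From HB Require Import structures.
From mathcomp Require Import all_boot all_order all_algebra all_field.
Set Implicit Arguments. Unset Strict Implicit. Unset Printing Implicit Defensive.
Import Order.TTheory GRing.Theory Num.Theory.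
Local Open Scope ring_scope.

(* e^{2 pi i / p}: p.-root (-1) is the p-th root of -1 of minimal nonnegative
   argument, namely e^{i pi / p}; its square is e^{2 pi i / p}. *)
Definition zeta (p : nat) : algC := (p.-root (-1)) ^+ 2.

Definition chi (p : nat) (t : 'F_p) : algC := zeta p ^+ (val t).

Definition dotp (p n : nat) (x b : 'rV['F_p]_n) : 'F_p := \sum_(i < n) x 0 i * b 0 i.

Definition inner (p n : nat) (f h : 'rV['F_p]_n -> algC) : algC :=
  \sum_(x : 'rV['F_p]_n) f x * (h x)^*.

Definition gabor (p n : nat) (g : 'rV['F_p]_n -> algC) (a b : 'rV['F_p]_n) :
  'rV['F_p]_n -> algC := fun x => g (x - a) * chi (dotp x b).

Definition is_ONB (p n : nat) (T : finType) (I : {set T})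
  (e : T -> 'rV['F_p]_n -> algC) : Prop :=
  (forall i j, i \in I -> j \in I -> inner (e i) (e j) = (i == j)%:R) /\
  (forall f : 'rV['F_p]_n -> algC, exists c : T -> algC,
     forall x, f x = \sum_(i in I) c i * e i x).

Definition gabor_ONB (p n : nat) (g : 'rV['F_p]_n -> algC)
  (A B : {set 'rV['F_p]_n}) : Prop :=
  is_ONB (setX A B) (fun ab => gabor g ab.1 ab.2).

Definition setA (p k l : nat) : {set 'rV['F_p]_(k + l)} :=
  [set row_mx a1 (0 : 'rV['F_p]_l) | a1 : 'rV['F_p]_k].
Definition setB (p k l : nat) : {set 'rV['F_p]_(k + l)} :=
  [set row_mx (0 : 'rV['F_p]_k) b2 | b2 : 'rV['F_p]_l].

(* Main.v *)
Require Import Defs.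
From HB Require Import structures.
From mathcomp Require Import all_boot all_order all_algebra all_field.
Import Order.TTheory GRing.Theory Num.Theory.
Local Open Scope ring_scope.

Section Chi.
Variable p : nat.
Hypothesis hp : prime p.

Lemma p_gt1 : (1 < p)%N. Proof. exact: prime_gt1. Qed.
Lemma p_gt0 : (0 < p)%N. Proof. exact: prime_gt0. Qed.

Lemma zetaX : zeta p ^+ p = 1.
Proof. by rewrite /zeta -exprM mulnC exprM rootCK ?p_gt0 // sqrrN expr1n. Qed.

Lemma zeta_neq1 : zeta p != 1.
Proof.
rewrite /zeta sqrf_eq1 negb_or; apply/andP; split.
  by rewrite rootC_eq1 ?p_gt0 // eq_sym -addr_eq0 (_ : 1 + 1 = 2%:R) // pnatr_eq0.
apply/eqP=> h; have := rootC_lt0 (-1 : algC) p_gt1; rewrite h.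
by rewrite oppr_lt0 ltr01.
Qed.

Lemma val_Fp_add (s t : 'F_p) : val (s + t) = ((val s + val t) %% p)%N.
Proof. rewrite /=; congr (_ %% _)%N; exact: Fp_cast. Qed.

Lemma chiD (s t : 'F_p) : chi (s + t) = chi s * chi t.
Proof. by rewrite /chi val_Fp_add (expr_mod _ zetaX) exprD. Qed.

Lemma chi0 : chi (0 : 'F_p) = 1.
Proof. by rewrite /chi expr0. Qed.

Lemma chiN (t : 'F_p) : chi (- t) * chi t = 1.
Proof. by rewrite -chiD addNr chi0. Qed.

Lemma norm_zeta : `|zeta p| = 1.
Proof.
apply/eqP; rewrite -(pexpr_eq1 (x := `|zeta p|) (n := p)) ?p_gt0 //.
by rewrite -normrX zetaX normr1.
Qed.

Lemma conj_chi (t : 'F_p) : (chi t)^* = chi (- t).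
Proof.
have n1 : `|chi t| = 1 by rewrite /chi normrX norm_zeta expr1n.
have := normCK (chi t); rewrite n1 expr1n => h.
by rewrite -[LHS]mul1r -(chiN t) -mulrA -h mulr1.
Qed.

Lemma chi1 : chi (1 : 'F_p) != 1.
Proof.
have -> : chi (1 : 'F_p) = zeta p.
  by rewrite /chi /= modn_small // expr1.
exact: zeta_neq1.
Qed.
End Chi.

Section Dot.
Variable p : nat.
Hypothesis hp : prime p.

Lemma dotpDl n (x y b : 'rV['F_p]_n) : dotp (x + y) b = dotp x b + dotp y b.
Proof. by rewrite /dotp -big_split; apply: eq_bigr => i _; rewrite mxE mulrDl. Qed.

Lemma dotpNl n (x b : 'rV['F_p]_n) : dotp (- x) b = - dotp x b.
Proof. by rewrite /dotp -sumrN; apply: eq_bigr => i _; rewrite mxE mulNr. Qed.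

Lemma dotpBl n (x y b : 'rV['F_p]_n) : dotp (x - y) b = dotp x b - dotp y b.
Proof. by rewrite dotpDl dotpNl. Qed.

Lemma dotpC n (x b : 'rV['F_p]_n) : dotp x b = dotp b x.
Proof. by rewrite /dotp; apply: eq_bigr => i _; rewrite mulrC. Qed.

Lemma dotpDr n (x y b : 'rV['F_p]_n) : dotp b (x + y) = dotp b x + dotp b y.
Proof. by rewrite dotpC [dotp b x]dotpC [dotp b y]dotpC dotpDl. Qed.

Lemma dotp0l n (b : 'rV['F_p]_n) : dotp 0 b = 0.
Proof. by rewrite /dotp big1 // => i _; rewrite mxE mul0r. Qed.

Lemma dotp0r n (b : 'rV['F_p]_n) : dotp b 0 = 0.
Proof. by rewrite dotpC dotp0l. Qed.

Lemma dotp_row_mx k l (x1 y1 : 'rV['F_p]_k) (x2 y2 : 'rV['F_p]_l) :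
  dotp (row_mx x1 x2) (row_mx y1 y2) = dotp x1 y1 + dotp x2 y2.
Proof.
rewrite /dotp big_split_ord /=; congr (_ + _); apply: eq_bigr => i _.
  by rewrite !row_mxEl.
by rewrite !row_mxEr.
Qed.

Lemma card_rV n : #|{: 'rV['F_p]_n}| = (p ^ n)%N.
Proof. by rewrite card_mx card_Fp // mul1n. Qed.

Lemma sum_chi n (v : 'rV['F_p]_n) :
  \sum_(s : 'rV['F_p]_n) chi (dotp v s) = (v == 0)%:R * (p ^ n)%:R.
Proof.
have [->|nz] := eqVneq v 0.
  rewrite mul1r (eq_bigr (fun _ => 1)) => [|s _]; last by rewrite dotp0l chi0.
  by rewrite sumr_const card_rV.
rewrite mul0r.
have [i hi] : exists i, v 0 i != 0.
  apply/existsP; apply: contraNT nz => /existsPn h; apply/eqP/rowP => j.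
  by rewrite mxE; apply/eqP/negbNE/h.
pose s0 : 'rV['F_p]_n := (v 0 i)^-1 *: delta_mx 0 i.
have ds0 : dotp v s0 = 1.
  rewrite /dotp (bigD1 i) //= big1 => [|j hj]; last by rewrite !mxE (negbTE hj) andbF mulr0 mulr0.
  by rewrite !mxE !eqxx mulr1 addr0 mulfV.
set S := \sum_s _.
have : S = S * chi (1 : 'F_p).
  rewrite [in LHS]/S (reindex_inj (addIr s0)) /= /S mulr_suml; apply: eq_bigr => s _.
  by rewrite dotpDr ds0 (@chiD _ hp).
move/eqP; rewrite -subr_eq0 -{1}(mulr1 S) -mulrBr mulf_eq0 subr_eq0 [1 == _]eq_sym (negbTE (@chi1 _ hp)) orbF.
by move/eqP.
Qed.

Lemma orth n (x y : 'rV['F_p]_n) :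
  \sum_(s : 'rV['F_p]_n) chi (dotp x s) * chi (- dotp y s) = (x == y)%:R * (p ^ n)%:R.
Proof.
rewrite -(subr_eq0 x y) -sum_chi; apply: eq_bigr => s _.
by rewrite -(@chiD _ hp) dotpBl.
Qed.

Lemma inv1 n (F : 'rV['F_p]_n -> algC) y :
  \sum_(m : 'rV['F_p]_n) (\sum_(t : 'rV['F_p]_n) F t * chi (dotp t m)) * chi (- dotp y m)
  = (p ^ n)%:R * F y.
Proof.
under eq_bigr do rewrite mulr_suml.
rewrite exchange_big /=.
under eq_bigr do (under eq_bigr do rewrite -mulrA; rewrite -mulr_sumr orth).
rewrite (bigD1 y) //= big1 => [|t ht]; last by rewrite (negbTE ht) mul0r mulr0.
by rewrite eqxx mul1r addr0 mulrC.
Qed.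

Lemma inv2 n (F : 'rV['F_p]_n -> algC) y :
  \sum_(m : 'rV['F_p]_n) (\sum_(t : 'rV['F_p]_n) F t * chi (- dotp t m)) * chi (dotp y m)
  = (p ^ n)%:R * F y.
Proof.
under eq_bigr do rewrite mulr_suml.
rewrite exchange_big /=.
under eq_bigr do (under eq_bigr do rewrite -mulrA [chi (- _) * _]mulrC; rewrite -mulr_sumr orth).
rewrite (bigD1 y) //= big1 => [|t ht]; last by rewrite eq_sym (negbTE ht) mul0r mulr0.
by rewrite eqxx mul1r addr0 mulrC.
Qed.

End Dot.

Section Main.
Variables (p k l : nat).
Hypothesis hp : prime p.
Variable g : 'rV['F_p]_(k + l) -> algC.

Lemma sum_row (F : 'rV['F_p]_(k + l) -> algC) :
  \sum_x F x = \sum_(x1 : 'rV['F_p]_k) \sum_(x2 : 'rV['F_p]_l) F (row_mx x1 x2).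
Proof.
rewrite pair_bigA /=; apply: (reindex (fun q : 'rV['F_p]_k * 'rV['F_p]_l => row_mx q.1 q.2)).
exists (fun x => (lsubmx x, rsubmx x)) => [[a b] _ | x _] /=.
  by rewrite row_mxKl row_mxKr.
by rewrite hsubmxK.
Qed.

Definition Hc (x2 : 'rV['F_p]_l) (t : 'rV['F_p]_k) : algC :=
  \sum_(y : 'rV['F_p]_k) g (row_mx (y + t) x2) * (g (row_mx y x2))^*.

Definition ghat (x2 : 'rV['F_p]_l) (m : 'rV['F_p]_k) : algC :=
  \sum_(x1 : 'rV['F_p]_k) g (row_mx x1 x2) * chi (- dotp x1 m).

Lemma hat_sq x2 m : `|ghat x2 m| ^+ 2 = \sum_t Hc x2 t * chi (- dotp t m).
Proof.
rewrite normCK /ghat rmorph_sum /= mulr_suml.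
rewrite (eq_bigr (fun x => \sum_(y : 'rV['F_p]_k) g (row_mx x x2) * chi (- dotp x m) *
   (g (row_mx y x2) * chi (- dotp y m))^*)); last first.
  move=> x _; exact: mulr_sumr.
rewrite exchange_big /=.
transitivity (\sum_(y : 'rV['F_p]_k) \sum_(t : 'rV['F_p]_k)
   g (row_mx (y + t) x2) * (g (row_mx y x2))^* * chi (- dotp t m)).
  apply: eq_bigr => y _; rewrite (reindex_inj (addrI y)) /=; apply: eq_bigr => t _.
  rewrite rmorphM /= conj_chi // opprK mulrACA -(@chiD _ hp) dotpDl.
  by rewrite opprD addrAC addNr add0r.
rewrite exchange_big /=; apply: eq_bigr => t _.
by rewrite /Hc mulr_suml.
Qed.

Lemma pk_neq0 n : (p ^ n)%:R != 0 :> algC.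
Proof. by rewrite pnatr_eq0 expn_eq0 (gtn_eqF (prime_gt0 hp)). Qed.

Lemma recover n (F : 'rV['F_p]_n -> algC) C :
  (forall m, \sum_t F t * chi (- dotp t m) = C) -> forall s, F s = (s == 0)%:R * C.
Proof.
move=> h s; apply: (mulfI (pk_neq0 n)); rewrite -inv2 //.
under eq_bigr do rewrite h.
by rewrite -mulr_sumr (@sum_chi _ hp) mulrA mulrC [C * _]mulrC.
Qed.

Lemma a_equiv x2 :
  (exists c : algC, forall m, `|ghat x2 m| = c) <->
  (forall t, Hc x2 t = (t == 0)%:R * Hc x2 0).
Proof.
split.
  move=> [c hc].
  have h : forall s, Hc x2 s = (s == 0)%:R * c ^+ 2.
    by apply: recover => m0; rewrite -hat_sq hc.
  by move=> t; rewrite h (h 0) eqxx mul1r.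
move=> h.
have hs : forall m, `|ghat x2 m| ^+ 2 = Hc x2 0.
  move=> m; rewrite hat_sq (bigD1 0) //= big1 => [|t ht]; last by rewrite h (negbTE ht) !mul0r.
  by rewrite dotp0l oppr0 chi0 mulr1 addr0.
exists `|ghat x2 0| => m; apply/eqP.
by rewrite -(eqrXn2 (n := 2)) ?normr_ge0 // !hs.
Qed.

End Main.

Section Gab.
Variables (p k l : nat).
Hypothesis hp : prime p.
Variable g : 'rV['F_p]_(k + l) -> algC.

Local Notation I := (setX (setA p k l) (setB p k l)).
Local Notation H := (@Hc p k l g).
Local Notation z0 := (0 : 'rV['F_p]_l).
Local Notation z0' := (0 : 'rV['F_p]_k).

Lemma row_mx_eqE (a c : 'rV['F_p]_k) (b d : 'rV['F_p]_l) :
  (row_mx a b == row_mx c d) = (a == c) && (b == d).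
Proof.
by apply/eqP/andP => [/eq_row_mx[-> ->] | [/eqP-> /eqP->]].
Qed.

Lemma pairI_eqE (a a' : 'rV['F_p]_k) (b b' : 'rV['F_p]_l) :
  ((row_mx a z0, row_mx z0' b) == (row_mx a' z0, row_mx z0' b')) = (a == a') && (b == b').
Proof. by rewrite xpair_eqE !row_mx_eqE !eqxx andbT. Qed.

Lemma memI a1 b2 : (row_mx a1 z0, row_mx z0' b2) \in I.
Proof. by apply/setXP; split; apply/imsetP; [exists a1 | exists b2]. Qed.

Lemma sumI (F : 'rV['F_p]_(k + l) * 'rV['F_p]_(k + l) -> algC) :
  \sum_(i in I) F i = \sum_(a1 : 'rV['F_p]_k) \sum_(b2 : 'rV['F_p]_l) F (row_mx a1 0, row_mx 0 b2).
Proof.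
have -> : I = (fun q : 'rV['F_p]_k * 'rV['F_p]_l => (row_mx q.1 0, row_mx 0 q.2)) @: setT.
  apply/setP => -[a b]; apply/setXP/imsetP => [[/imsetP[a1 _ ->] /imsetP[b2 _ ->]] | [[a1 b2] _ [-> ->]]].
    by exists (a1, b2).
  by split; apply/imsetP; [exists a1 | exists b2].
rewrite big_imset /=; last first.
  by move=> [a1 b2] [a1' b2'] _ _ [] /eq_row_mx[-> _] /eq_row_mx[_ ->].
rewrite pair_bigA /=; apply: eq_bigl => q; by rewrite inE.
Qed.

Lemma gabor_row a1 b2 x1 x2 :
  gabor g (row_mx a1 0) (row_mx 0 b2) (row_mx x1 x2) = g (row_mx (x1 - a1) x2) * chi (dotp x2 b2).
Proof. by rewrite /gabor opp_row_mx add_row_mx oppr0 addr0 dotp_row_mx dotp0r add0r. Qed.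

Lemma inner_gabor a1 b2 a1' b2' :
  inner (gabor g (row_mx a1 0) (row_mx 0 b2)) (gabor g (row_mx a1' 0) (row_mx 0 b2'))
  = \sum_(x2 : 'rV['F_p]_l) H x2 (a1' - a1) * chi (dotp x2 (b2 - b2')).
Proof.
rewrite /inner sum_row exchange_big /=; apply: eq_bigr => x2 _.
rewrite /H /Hc mulr_suml (reindex_inj (addIr a1')) /=; apply: eq_bigr => y _.
rewrite !gabor_row rmorphM /= conj_chi // addrK mulrACA -(@chiD _ hp).
rewrite -addrA; congr (_ * chi _).
by rewrite dotpC [dotp x2 b2']dotpC -dotpNl -dotpDl dotpC.
Qed.

Lemma H0E x2 : H x2 0 = \sum_(x1 : 'rV['F_p]_k) `|g (row_mx x1 x2)| ^+ 2.
Proof. by apply: eq_bigr => y _; rewrite addr0 normCK. Qed.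

Lemma inner_gg : inner g g = \sum_(x2 : 'rV['F_p]_l) H x2 0.
Proof.
rewrite /inner sum_row exchange_big /=; apply: eq_bigr => x2 _.
by apply: eq_bigr => y _; rewrite addr0.
Qed.

Definition PP := forall x2 t, H x2 t = (t == 0)%:R / (p ^ l)%:R.

Lemma onb_PP : gabor_ONB g (setA p k l) (setB p k l) -> PP.
Proof.
move=> [ho _] y t.
have hs : forall s, \sum_(x2 : 'rV['F_p]_l) H x2 t * chi (dotp x2 s) = ((t == 0) && (s == 0))%:R.
  move=> s; have := ho _ _ (memI 0 s) (memI t 0); rewrite /= inner_gabor pairI_eqE subr0 subr0.
  by rewrite eq_sym => ->.
have := @inv1 _ hp l (fun x2 => H x2 t) y.
under eq_bigr do rewrite hs.
rewrite (bigD1 0) //= big1 => [|s hs0]; last by rewrite (negbTE hs0) andbF mul0r.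
rewrite eqxx andbT dotp0r oppr0 chi0 mulr1 addr0 => e.
by rewrite e mulrC mulKf // pk_neq0.
Qed.

Lemma kernel x y : PP ->
  \sum_(i in I) (gabor g i.1 i.2 y)^* * gabor g i.1 i.2 x = (y == x)%:R.
Proof.
move=> hP; rewrite -(hsubmxK x) -(hsubmxK y) sumI.
set x1 := lsubmx x; set x2 := rsubmx x; set y1 := lsubmx y; set y2 := rsubmx y.
transitivity (\sum_(a1 : 'rV['F_p]_k) (g (row_mx (y1 - a1) y2))^* * g (row_mx (x1 - a1) x2)
   * ((x2 == y2)%:R * (p ^ l)%:R)).
  apply: eq_bigr => a1 _; rewrite -(@orth _ hp) mulr_sumr; apply: eq_bigr => b2 _ /=.
  by rewrite !gabor_row rmorphM /= conj_chi // mulrACA [X in _ * X]mulrC.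
rewrite row_mx_eqE; have [e2|ne2] := eqVneq x2 y2; last first.
  by rewrite andbF big1 // => a1 _; rewrite mul0r mulr0.
rewrite -e2 andbT mul1r -mulr_suml.
transitivity (H x2 (x1 - y1) * (p ^ l)%:R).
  congr (_ * _); rewrite /Hc (reindex_inj (can_inj (subKr y1))) /=.
  apply: eq_bigr => z _; rewrite subKr mulrC; congr (_ * _); congr (g (row_mx _ _)).
  by rewrite opprB addrCA.
by rewrite hP subr_eq0 eq_sym mulfVK // pk_neq0.
Qed.

Lemma PP_onb : PP -> gabor_ONB g (setA p k l) (setB p k l).
Proof.
move=> hP; split.
  move=> [a b] [a' b'] /setXP[/imsetP[a1 _ ->] /imsetP[b2 _ ->]]
    /setXP[/imsetP[a1' _ ->] /imsetP[b2' _ ->]].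
  rewrite inner_gabor pairI_eqE.
  under eq_bigr do rewrite hP dotpC.
  rewrite -mulr_sumr (@sum_chi _ hp) subr_eq0 [a1' == _]eq_sym subr_eq0.
  by rewrite mulrACA mulVf ?pk_neq0 // mulr1 -natrM mulnb.
move=> f; exists (fun i => inner f (gabor g i.1 i.2)) => x.
transitivity (\sum_y f y * (y == x)%:R).
  by rewrite (bigD1 x) //= big1 => [|y hy]; rewrite ?(negbTE hy) ?mulr0 // eqxx mulr1 addr0.
under [RHS]eq_bigr do rewrite /inner mulr_suml.
rewrite exchange_big /=; apply: eq_bigr => y _.
by rewrite -(kernel x y hP) mulr_sumr; apply: eq_bigr => i _; rewrite mulrA.
Qed.

End Gab.

Theorem theorem1p6 (p k l : nat) (hp : prime p) (hk : (1 <= k)%N) (hl : (1 <= l)%N)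
  (g : 'rV['F_p]_(k + l) -> algC) (hg : inner g g = 1) :
  gabor_ONB g (setA p k l) (setB p k l) <->
  ((forall x2 : 'rV['F_p]_l, exists c : algC, forall m : 'rV['F_p]_k,
      `| \sum_(x1 : 'rV['F_p]_k) g (row_mx x1 x2) * chi (- dotp x1 m) | = c) /\
   (exists c : algC, forall x2 : 'rV['F_p]_l,
      \sum_(x1 : 'rV['F_p]_k) `| g (row_mx x1 x2) | ^+ 2 = c)).
Proof.
have hpl := @pk_neq0 p hp l.
split.
  move=> /(@onb_PP p k l hp g) hP.
  have H0 : forall x2, @Hc p k l g x2 0 = (p ^ l)%:R^-1 by move=> x2; rewrite hP eqxx mul1r.
  split.
    move=> x2; apply: (proj2 (@a_equiv p k l hp g x2)) => t.
    by rewrite H0 hP.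
  by exists (p ^ l)%:R^-1 => x2; rewrite -H0E H0.
move=> [ha [c hc]]; apply: (@PP_onb p k l hp g) => x2 t.
have hH0 : forall x2, @Hc p k l g x2 0 = c by move=> y; rewrite H0E hc.
have hc' : c = (p ^ l)%:R^-1.
  move: hg; rewrite inner_gg.
  under eq_bigr do rewrite hH0.
  by rewrite sumr_const card_rV // => e; apply: (mulIf hpl); rewrite mulr_natr e mulVf.
by rewrite (proj1 (@a_equiv p k l hp g x2) (ha x2) t) hH0 hc'.
Qed.
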